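(* Let $A$ be a real sequence over $\mathbb{Z}^2$ with $|A|=3.99$, maximal multiplicity $\le\frac12$, and such that no line in $\mathbb{R}^2$ contains more than $\frac32$ points of $A$. Suppose there exists a line $\ell$ containing $\frac32$ points of $A$. Then $\Sigma^1_{\mathbb{R}}(A)$ contains a lattice point of $\mathbb{Z}^2$ in its interior.
   Context: A real sequence $A$ over $\mathbb{Z}^2$ is a family of pairs $(a_i,\mu_i)$ of distinct points $a_i\in\mathbb{Z}^2$ and non-negative reals $\mu_i$ (multiplicities); $|A|=\sum_i\mu_i$. A set $X$ contains $\sum_{i:a_i\in X}\mu_i$ points of $A$. $\Sigma^1_{\mathbb{R}}(A)=\{\sum_i t_ia_i : t_i\in[0,\mu_i],\ \sum_i t_i=1\}$. *)

(* Defs.v *)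
From HB Require Import structures.
From mathcomp Require Import all_boot all_order all_algebra.
From mathcomp Require Import all_classical all_reals all_analysis.
Set Implicit Arguments. Unset Strict Implicit. Unset Printing Implicit Defensive.
Import Order.TTheory GRing.Theory Num.Theory.
Local Open Scope ring_scope.
Local Open Scope classical_set_scope.

(* A real sequence over Z^2: n pairwise distinct points a i in Z^2 with
   nonnegative real multiplicities mu i. *)
Definition real_seq (R : realType) (n : nat) (a : 'I_n -> int * int)
  (mu : 'I_n -> R) : Prop :=
  injective a /\ forall i, 0 <= mu i.

Definition toR2 (R : realType) (p : int * int) : R * R :=
  ((p.1)%:~R, (p.2)%:~R).

Definition total_mult (R : realType) (n : nat) (mu : 'I_n -> R) : R :=
  \sum_(i < n) mu i.

(* the line {x | c1 x1 + c2 x2 = c0} in R^2, (c1,c2) <> (0,0) *)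
Definition on_line (R : realType) (c1 c2 c0 : R) (x : R * R) : bool :=
  c1 * x.1 + c2 * x.2 == c0.

Definition points_in (R : realType) (n : nat) (a : 'I_n -> int * int)
  (mu : 'I_n -> R) (X : pred (R * R)) : R :=
  \sum_(i < n | X (toR2 R (a i))) mu i.

Definition Sigma1R (R : realType) (n : nat) (a : 'I_n -> int * int)
  (mu : 'I_n -> R) : set (R * R) :=
  [set x | exists t : 'I_n -> R,
     (forall i, 0 <= t i <= mu i) /\ \sum_(i < n) t i = 1 /\
     x = (\sum_(i < n) t i * ((a i).1)%:~R, \sum_(i < n) t i * ((a i).2)%:~R)].

(* Main.v *)
Require Import Defs.
From HB Require Import structures.
From mathcomp Require Import all_boot all_order all_algebra.
From mathcomp Require Import all_classical all_reals all_analysis.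
From mathcomp Require Import ring lra zify.
Import Order.TTheory GRing.Theory Num.Theory.
Local Open Scope ring_scope.
Import numFieldNormedType.Exports.
Local Open Scope classical_set_scope.


Lemma int_crit (R : realType) (S : set (R * R)) (z : R * R) (e : R) :
  0 < e -> (forall w : R * R, `|w.1 - z.1| < e -> `|w.2 - z.2| < e -> S w) ->
  interior S z.
Proof.
move=> e0 H; rewrite /interior /=.
apply/nbhs_ballP; exists e => //= w [] /= h1 h2.
apply: H.
- by move: h1; rewrite /ball /= distrC.
- by move: h2; rewrite /ball /= distrC.
Qed.

Lemma sum_delta (R : realType) n (j : 'I_n) (c : R) (F : 'I_n -> R) :
  \sum_(l < n) (if l == j then c else 0) * F l = c * F j.
Proof.
rewrite (bigD1 j) //= eqxx big1 ?addr0 // => l /negbTE -> ; by rewrite mul0r.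
Qed.

Lemma sum_delta1 (R : realType) n (j : 'I_n) (c : R) :
  \sum_(l < n) (if l == j then c else 0) = c.
Proof.
rewrite (bigD1 j) //= eqxx big1 ?addr0 // => l /negbTE -> //.
Qed.

Lemma int_norm_ge1 (R : realType) (z : int) : z != 0 -> 1 <= `|(z%:~R : R)|.
Proof.
move=> nz; rewrite -intr_norm ler1z.
by rewrite -gtz0_ge1 normr_gt0.
Qed.


Lemma div_bound (R : realType) (x D b : R) : 1 <= `|D| -> `|x| <= b -> `|x / D| <= b.
Proof.
move=> hD hx; rewrite normrM normfV.
have D0 : 0 < `|D| by apply: lt_le_trans hD.
rewrite ler_pdivrMr //; apply: (le_trans hx).
have b0 : 0 <= b by apply: le_trans hx.
by rewrite -{1}(mulr1 b) ler_wpM2l.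
Qed.

Lemma num_bound (R : realType) (d1 d2 Q1 Q2 e K : R) :
  `|d1| < e -> `|d2| < e -> `|Q1| + `|Q2| <= K ->
  `|d1 * Q2 - d2 * Q1| <= e * K.
Proof.
move=> h1 h2 hK.
apply: (le_trans (ler_normB _ _)).
rewrite !normrM.
have e0 : 0 <= e by apply: le_trans (ltW h1).
apply: (@le_trans _ _ (e * `|Q2| + e * `|Q1|)).
  by apply: lerD; apply: ler_wpM2r => //; apply: ltW.
by rewrite -mulrDr ler_wpM2l // addrC.
Qed.

Lemma interior_free (R : realType) n (a : 'I_n -> int * int) (mu t : 'I_n -> R)
  (i j k : 'I_n) :
  (forall l, 0 <= t l <= mu l) -> \sum_(l < n) t l = 1 ->
  0 < t i < mu i -> 0 < t j < mu j -> 0 < t k < mu k ->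
  ((a j).1 - (a i).1) * ((a k).2 - (a i).2)
    - ((a j).2 - (a i).2) * ((a k).1 - (a i).1) != 0 ->
  interior (Sigma1R a mu)
    (\sum_(l < n) t l * ((a l).1)%:~R, \sum_(l < n) t l * ((a l).2)%:~R).
Proof.
move=> ht ht1 /andP[ti0 ti1] /andP[tj0 tj1] /andP[tk0 tk1] hD.
have ij : i != j.
  by apply: contra hD => /eqP ->; rewrite !subrr !mul0r subrr.
have ik : i != k.
  by apply: contra hD => /eqP ->; rewrite !subrr !mulr0 subrr.
have jk : j != k.
  by apply: contra hD => /eqP ->; rewrite mulrC subrr.
set P1 : R := ((a j).1 - (a i).1)%:~R.
set P2 : R := ((a j).2 - (a i).2)%:~R.
set Q1 : R := ((a k).1 - (a i).1)%:~R.
set Q2 : R := ((a k).2 - (a i).2)%:~R.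
set DR := P1 * Q2 - P2 * Q1.
have hDR : 1 <= `|DR|.
  rewrite /DR /P1 /P2 /Q1 /Q2 -!intrM -intrB; exact: int_norm_ge1.
have DR0 : DR != 0 by rewrite -normr_gt0; apply: lt_le_trans hDR.
set m := Num.min (Num.min (Num.min (t i) (mu i - t i)) (Num.min (t j) (mu j - t j)))
                 (Num.min (t k) (mu k - t k)).
have m0 : 0 < m by rewrite /m !lt_min !subr_gt0 ti0 ti1 tj0 tj1 tk0 tk1.
have mi1 : m <= t i by rewrite /m !ge_min lexx.
have mi2 : m <= mu i - t i by rewrite /m !ge_min lexx !orbT.
have mj1 : m <= t j by rewrite /m !ge_min lexx !orbT.
have mj2 : m <= mu j - t j by rewrite /m !ge_min lexx !orbT.
have mk1 : m <= t k by rewrite /m !ge_min lexx !orbT.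
have mk2 : m <= mu k - t k by rewrite /m !ge_min lexx !orbT.
set K := `|P1| + `|P2| + `|Q1| + `|Q2| + 1.
have K0 : 0 < K by rewrite /K ltr_wpDl ?ltr01 // !addr_ge0.
set e := m / (2 * K).
have e0 : 0 < e by rewrite /e divr_gt0 // mulr_gt0.
have eK : e * K = m / 2.
  rewrite /e; field; by rewrite gt_eqF.
apply: (@int_crit R (Sigma1R a mu) _ e e0) => w h1 h2.
set z1 := \sum_(l < n) t l * ((a l).1)%:~R in h1 *.
set z2 := \sum_(l < n) t l * ((a l).2)%:~R in h2 *.
set d1 := w.1 - z1 in h1; set d2 := w.2 - z2 in h2.
set u := (d1 * Q2 - d2 * Q1) / DR.
set v := (P1 * d2 - P2 * d1) / DR.
have hu : `|u| <= m / 2.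
  rewrite -eK; apply: div_bound => //; apply: num_bound => //; rewrite /K; have := normr_ge0 P1; have := normr_ge0 P2; have := normr_ge0 Q1; have := normr_ge0 Q2; lra.
have hv : `|v| <= m / 2.
  rewrite -eK; apply: div_bound => //.
  rewrite [P1 * d2]mulrC [P2 * d1]mulrC.
  apply: num_bound => //; rewrite /K; have := normr_ge0 P1; have := normr_ge0 P2; have := normr_ge0 Q1; have := normr_ge0 Q2; lra.
move: hu hv; rewrite !ler_norml => /andP[hu1 hu2] /andP[hv1 hv2].
exists (fun l => t l + (if l == j then u else 0) + (if l == k then v else 0)
                 - (if l == i then u + v else 0)).
split.
  move=> l /=; have [hl1 hl2] := andP (ht l).
  have ji : j != i by rewrite eq_sym.
  have ki : k != i by rewrite eq_sym.
  have kj : k != j by rewrite eq_sym.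
  case: (eqVneq l i) => [->|li].
    rewrite ?eqxx ?(negbTE ij) ?(negbTE ik) ?addr0 ?subr0; apply/andP; split; lra.
  case: (eqVneq l j) => [->|lj].
    rewrite ?eqxx ?(negbTE ji) ?(negbTE jk) ?addr0 ?subr0; apply/andP; split; lra.
  case: (eqVneq l k) => [->|lk].
    rewrite ?eqxx ?(negbTE ki) ?(negbTE kj) ?addr0 ?subr0; apply/andP; split; lra.
  by rewrite ?addr0 ?subr0 hl1 hl2.
split.
  rewrite sumrB !big_split /= ht1 !sum_delta1; lra.
have Hs : forall F : 'I_n -> R, \sum_(l < n) (t l + (if l == j then u else 0)
   + (if l == k then v else 0) - (if l == i then u + v else 0)) * F l
   = \sum_(l < n) t l * F l + u * (F j - F i) + v * (F k - F i).
  move=> F; under eq_bigr do rewrite !mulrDl mulNr.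
  rewrite !big_split /= sumrN !sum_delta; ring.
rewrite !Hs.
have E1 : u * P1 + v * Q1 = d1.
  rewrite /u /v [_ / DR * P1]mulrAC [_ / DR * Q1]mulrAC -mulrDl.
  have -> : (d1 * Q2 - d2 * Q1) * P1 + (P1 * d2 - P2 * d1) * Q1 = d1 * DR by rewrite /DR; ring.
  by rewrite mulfK.
have E2 : u * P2 + v * Q2 = d2.
  rewrite /u /v [_ / DR * P2]mulrAC [_ / DR * Q2]mulrAC -mulrDl.
  have -> : (d1 * Q2 - d2 * Q1) * P2 + (P1 * d2 - P2 * d1) * Q2 = d2 * DR by rewrite /DR; ring.
  by rewrite mulfK.
move: E1 E2; rewrite /P1 /P2 /Q1 /Q2 !intrB => E1 E2.
rewrite [w]surjective_pairing; congr (_, _).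
- rewrite /d1 in E1; rewrite -/z1; lra.
- rewrite /d2 in E2; rewrite -/z2; lra.
Qed.

Set Implicit Arguments. Unset Strict Implicit.



Definition mn {R : realType} (x y : R) := if x <= y then x else y.

Lemma mnP (R : realType) (x y : R) : (mn x y = x /\ x <= y) \/ (mn x y = y /\ y < x).
Proof. rewrite /mn; case: lerP => h; [left|right]; split => //. Qed.

Lemma mn_le1 (R : realType) (al x : R) : mn al x <= x.
Proof. by case: (mnP al x) => [[-> h]|[-> h]] //; rewrite ltW. Qed.

Lemma mn_le2 (R : realType) (al x : R) : mn al x <= al.
Proof. by case: (mnP al x) => [[-> h]|[-> h]] //; rewrite ltW. Qed.

Lemma mn_ge0 (R : realType) (al x : R) : 0 <= al -> 0 <= x -> 0 <= mn al x.
Proof. by case: (mnP al x) => [[-> h]|[-> h]]. Qed.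

Lemma mn_diff (R : realType) (al x y : R) : x <= y ->
  0 <= mn al y - mn al x <= y - x.
Proof.
move=> xy; case: (mnP al x) => [[-> h1]|[-> h1]]; case: (mnP al y) => [[-> h2]|[-> h2]];
apply/andP; split; lra.
Qed.

Lemma phi_ge (R : realType) (al c m : R) : 1/2 <= al -> al <= 1 ->
  m <= c -> m <= 3/2 - c -> m <= 1/2 -> m <= mn al c + mn al (3/2 - c) - al.
Proof.
move=> h1 h2 h3 h4 h5.
case: (mnP al c) => [[-> e1]|[-> e1]]; case: (mnP al (3/2 - c)) => [[-> e2]|[-> e2]]; lra.
Qed.



Lemma sum_ind (R : realType) n (nu : 'I_n -> R) (P : pred 'I_n) :
  \sum_(i < n) nu i * (P i)%:R = \sum_(i < n | P i) nu i.
Proof.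
rewrite [RHS]big_mkcond; apply: eq_bigr => i _; case: (P i); by rewrite ?mulr1 ?mulr0.
Qed.

Lemma nat_step (P : nat -> bool) N : P 0 -> ~~ P N -> exists m, P m && ~~ P m.+1.
Proof.
elim: N => [->//|N IH] h0 hN.
case hN' : (P N); last by apply: IH => //; rewrite hN'.
by exists N; rewrite hN' hN.
Qed.

Definition ind4 (R : realType) (j x : int) (c1 c2 c3 c4 : R) : R :=
  c1 * ((x < j)%R)%:R + c2 * ((x == j)%R)%:R + c3 * ((x == j + 1)%R)%:R + c4 * ((j + 1 < x)%R)%:R.

Lemma ind4_cases (R : realType) (j x : int) (c1 c2 c3 c4 : R) :
  [\/ x < j /\ ind4 j x c1 c2 c3 c4 = c1, x = j /\ ind4 j x c1 c2 c3 c4 = c2,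
      x = j + 1 /\ ind4 j x c1 c2 c3 c4 = c3 | j + 1 < x /\ ind4 j x c1 c2 c3 c4 = c4].
Proof.
rewrite /ind4.
have [h|h] : (x < j) \/ (j <= x) by lia.
  apply: Or41; split => //.
  have -> : (x < j) = true by lia.
  have -> : (x == j) = false by lia.
  have -> : (x == j + 1) = false by lia.
  have -> : (j + 1 < x) = false by lia.
  by rewrite /= ?mulr1n ?mulr0n ?mulr1 ?mulr0 ?addr0 ?add0r.
have [e|ne] : (x = j) \/ (x != j) by lia.
  apply: Or42; split => //.
  have -> : (x < j) = false by lia.
  have -> : (x == j) = true by lia.
  have -> : (x == j + 1) = false by lia.
  have -> : (j + 1 < x) = false by lia.
  by rewrite /= ?mulr1n ?mulr0n ?mulr1 ?mulr0 ?addr0 ?add0r.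
have [e|ne2] : (x = j + 1) \/ (x != j + 1) by lia.
  apply: Or43; split => //.
  have -> : (x < j) = false by lia.
  have -> : (x == j) = false by lia.
  have -> : (x == j + 1) = true by lia.
  have -> : (j + 1 < x) = false by lia.
  by rewrite /= ?mulr1n ?mulr0n ?mulr1 ?mulr0 ?addr0 ?add0r.
apply: Or44; split; first by lia.
have -> : (x < j) = false by lia.
have -> : (x == j) = false by lia.
have -> : (x == j + 1) = false by lia.
have -> : (j + 1 < x) = true by lia.
by rewrite /= ?mulr1n ?mulr0n ?mulr1 ?mulr0 ?addr0 ?add0r.
Qed.

Lemma sum_ind4 (R : realType) n (X : 'I_n -> int) (nu : 'I_n -> R) (j : int)
    (c1 c2 c3 c4 : R) :
  \sum_(i < n) nu i * ind4 j (X i) c1 c2 c3 c4 =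
  c1 * \sum_(i < n | X i < j) nu i + c2 * \sum_(i < n | X i == j) nu i
  + c3 * \sum_(i < n | X i == j + 1) nu i + c4 * \sum_(i < n | j + 1 < X i) nu i.
Proof.
rewrite -(sum_ind nu (fun i => X i < j)) -(sum_ind nu (fun i => X i == j)).
rewrite -(sum_ind nu (fun i => X i == j + 1)) -(sum_ind nu (fun i => j + 1 < X i)).
rewrite !mulr_sumr -!big_split /=; apply: eq_bigr => i _.
rewrite /ind4; ring.
Qed.

Lemma frac_props (R : realType) (s A : R) : 0 <= s -> s <= A ->
  [/\ s / A * A = s, 0 <= s / A & s / A <= 1].
Proof.
move=> s0 sA.
have [A0|Apos] := eqVneq A 0.
  have s0' : s = 0 by apply/eqP; rewrite eq_le s0 andbT -A0.
  by rewrite A0 s0' !mul0r lexx ler01.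
have Ap : 0 < A by rewrite lt_neqAle eq_sym Apos /= (le_trans s0 sA).
split; first by rewrite divfK.
  by rewrite divr_ge0 // ltW.
by rewrite ler_pdivrMr // mul1r.
Qed.

Lemma find_j (R : realType) n (X : 'I_n -> int) (nu : 'I_n -> R) :
  (forall i, 0 <= nu i) ->
  (forall k : int, \sum_(i | X i == k) nu i <= 1/2) ->
  \sum_(i < n) nu i = 3/2 ->
  exists j : int, 1/2 <= \sum_(i | j < X i) nu i /\ \sum_(i | j < X i) nu i <= 1.
Proof.
move=> nu0 hk htot.
set G := fun k : int => \sum_(i | k < X i) nu i.
set K : nat := (\sum_(i < n) `|X i|%N).+1.
have bnd : forall i, - (K%:Z) < X i < K%:Z.
  move=> i.
  have : (`|X i| <= \sum_(i < n) `|X i|)%N.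
    by rewrite (bigD1 i) //= leq_addr.
  rewrite /K; lia.
have GK : G K%:Z = 0.
  rewrite /G big1 // => i hi; have := bnd i; lia.
have Gm : G (- K%:Z) = 3/2.
  rewrite /G -htot [RHS](bigID (fun i => - K%:Z < X i)) /=.
  rewrite [X in _ + X]big1 ?addr0 // => i hi; have := bnd i; lia.
pose P := fun m : nat => 1/2 <= G (m%:Z - K%:Z).
have [m /andP[Pm nPm]] : exists m, P m && ~~ P m.+1.
  apply: (@nat_step P (2 * K)).
    by rewrite /P /= sub0r Gm; lra.
  rewrite /P.
  have -> : (2 * K)%N%:Z - K%:Z = K%:Z by lia.
  by rewrite GK -ltNge; lra.
exists (m%:Z - K%:Z); split => //.
move: nPm; rewrite /P -ltNge.
have -> : m.+1%:Z - K%:Z = (m%:Z - K%:Z) + 1 by lia.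
set j := m%:Z - K%:Z => hlt.
have split : G j = G (j + 1) + \sum_(i | X i == j + 1) nu i.
  rewrite /G (bigID (fun i => X i == j + 1)) /= addrC.
  congr (_ + _); apply: eq_bigl => i; lia.
rewrite -/(G j) split; have := hk (j + 1); lra.
Qed.



Lemma intr_le_m1 (R : realType) (z : int) : (z <= -1)%R -> (z%:~R : R) <= -1.
Proof. move=> h. have : (z%:~R : R) <= (-1 : int)%:~R by rewrite ler_int. by rewrite intrN. Qed.
Lemma intr_ge2 (R : realType) (z : int) : (2 <= z)%R -> 2 <= (z%:~R : R).
Proof. move=> h. have : (2 : int)%:~R <= (z%:~R : R) by rewrite ler_int. by []. Qed.

Section I4.
Variables (R : realType) (j x : int) (c1 c2 c3 c4 : R).
Lemma ind4_lt : x < j -> ind4 j x c1 c2 c3 c4 = c1.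
Proof. move=> h; case: (ind4_cases j x c1 c2 c3 c4) => -[] h' -> //; lia. Qed.
Lemma ind4_eq : x = j -> ind4 j x c1 c2 c3 c4 = c2.
Proof. move=> h; case: (ind4_cases j x c1 c2 c3 c4) => -[] h' -> //; lia. Qed.
Lemma ind4_eq1 : x = j + 1 -> ind4 j x c1 c2 c3 c4 = c3.
Proof. move=> h; case: (ind4_cases j x c1 c2 c3 c4) => -[] h' -> //; lia. Qed.
Lemma ind4_gt : j + 1 < x -> ind4 j x c1 c2 c3 c4 = c4.
Proof. move=> h; case: (ind4_cases j x c1 c2 c3 c4) => -[] h' -> //; lia. Qed.
End I4.

Lemma ind4_pw (R : realType) (j x : int) (p1 p2 p3 p4 : R) :
  p1 <= 0 -> 0 <= p4 ->
  ind4 j x (- p1) 0 p3 (2 * p4) <= ind4 j x p1 p2 p3 p4 * (x - j)%:~R.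
Proof.
move=> h1 h4.
have [h|[h|[h|h]]] : (x < j) \/ (x = j) \/ (x = j + 1) \/ (j + 1 < x) by lia.
- rewrite !ind4_lt //.
  have hd : ((x - j)%:~R : R) <= -1 by apply: intr_le_m1; lia.
  rewrite -subr_ge0.
  have -> : p1 * (x - j)%:~R - - p1 = p1 * ((x - j)%:~R + 1) by ring.
  by apply: mulr_le0 => //; lra.
- by rewrite !ind4_eq // h subrr mulr0.
- by rewrite !ind4_eq1 // h addrC addKr mulr1.
- rewrite !ind4_gt //.
  have hd : 2 <= ((x - j)%:~R : R) by apply: intr_ge2; lia.
  rewrite -subr_ge0.
  have -> : p4 * (x - j)%:~R - 2 * p4 = p4 * ((x - j)%:~R - 2) by ring.
  by apply: mulr_ge0 => //; lra.
Qed.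

Lemma ind4_rng (R : realType) (j x : int) (c1 c2 c3 c4 : R) :
  0 <= c1 <= 1 -> 0 <= c2 <= 1 -> 0 <= c3 <= 1 -> 0 <= c4 <= 1 ->
  0 <= ind4 j x c1 c2 c3 c4 <= 1.
Proof.
by move=> ? ? ? ?; case: (ind4_cases j x c1 c2 c3 c4) => -[] _ ->.
Qed.

Lemma ind4_lin (R : realType) (j x : int) (a1 a2 a3 a4 b1 b2 b3 b4 : R) :
  ind4 j x a1 a2 a3 a4 - ind4 j x b1 b2 b3 b4 = ind4 j x (a1 - b1) (a2 - b2) (a3 - b3) (a4 - b4).
Proof. rewrite /ind4; ring. Qed.

Lemma oneD (R : realType) n (X : 'I_n -> int) (nu : 'I_n -> R) (al : R) :
  (forall i, 0 <= nu i) ->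
  (forall k : int, \sum_(i | X i == k) nu i <= 1/2) ->
  \sum_(i < n) nu i = 3/2 -> 1/2 <= al -> al <= 1 ->
  exists sm sp : 'I_n -> R,
    [/\ forall i, 0 <= sm i <= nu i, forall i, 0 <= sp i <= nu i,
        \sum_(i < n) sm i = al, \sum_(i < n) sp i = al &
        1 + \sum_(i < n) sm i * (X i)%:~R <= \sum_(i < n) sp i * (X i)%:~R].
Proof.
move=> nu0 hk htot ha1 ha2.
have [j [hj1 hj2]] := find_j nu0 hk htot.
set A1 := \sum_(i | X i < j) nu i.
set A2 := \sum_(i | X i == j) nu i.
set A3 := \sum_(i | X i == j + 1) nu i.
set A4 := \sum_(i | j + 1 < X i) nu i.
have A1p : 0 <= A1 by apply: sumr_ge0.
have A2p : 0 <= A2 by apply: sumr_ge0.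
have A3p : 0 <= A3 by apply: sumr_ge0.
have A4p : 0 <= A4 by apply: sumr_ge0.
have A2h : A2 <= 1/2 by apply: hk.
have A3h : A3 <= 1/2 by apply: hk.
have Atot : A1 + A2 + A3 + A4 = 3/2.
  rewrite -htot -[A1]mul1r -[A2]mul1r -[A3]mul1r -[A4]mul1r -sum_ind4.
  apply: eq_bigr => i _.
  by case: (ind4_cases j (X i) (1:R) 1 1 1) => -[] _ ->; rewrite mulr1.
have Au : A3 + A4 = \sum_(i | j < X i) nu i.
  rewrite -(sum_ind nu (fun i => j < X i)).
  have -> : A3 + A4 = \sum_(i < n) nu i * ind4 j (X i) 0 0 1 1 by rewrite sum_ind4 -/A1 -/A2 -/A3 -/A4; ring.
  apply: eq_bigr => i _; congr (_ * _).
  case: (ind4_cases j (X i) (0:R) 0 1 1) => -[] h ->.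
  - by have -> : (j < X i) = false by clear -h; lia.
  - by have -> : (j < X i) = false by clear -h; lia.
  - by have -> : (j < X i) = true by clear -h; lia.
  - by have -> : (j < X i) = true by clear -h; lia.
move: hj1 hj2; rewrite -Au => hu1 hu2.
set S1 := mn al A1. set S2 := mn al (A1 + A2). set S3 := mn al (A1 + A2 + A3).
set T1 := mn al A4. set T2 := mn al (A3 + A4). set T3 := mn al (A2 + A3 + A4).
have [S1a S1b] : 0 <= S1 /\ S1 <= A1.
  split; [apply: mn_ge0 => //; lra | exact: mn_le1].
have [T1a T1b] : 0 <= T1 /\ T1 <= A4.
  split; [apply: mn_ge0 => //; lra | exact: mn_le1].
have /andP[S2a S2b] : 0 <= S2 - S1 <= A2.
  have h : A1 <= A1 + A2 by lra.
  by have := mn_diff al h; have -> : A1 + A2 - A1 = A2 by ring.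
have /andP[S3a S3b] : 0 <= S3 - S2 <= A3.
  have h : A1 + A2 <= A1 + A2 + A3 by lra.
  by have := mn_diff al h; have -> : A1 + A2 + A3 - (A1 + A2) = A3 by ring.
have /andP[T2a T2b] : 0 <= T2 - T1 <= A3.
  have h : A4 <= A3 + A4 by lra.
  by have := mn_diff al h; have -> : A3 + A4 - A4 = A3 by ring.
have /andP[T3a T3b] : 0 <= T3 - T2 <= A2.
  have h : A3 + A4 <= A2 + A3 + A4 by lra.
  by have := mn_diff al h; have -> : A2 + A3 + A4 - (A3 + A4) = A2 by ring.
have S3c : 0 <= al - S3 <= A4.
  rewrite /S3; case: (mnP al (A1 + A2 + A3)) => -[-> h]; apply/andP; split; lra.
have T3c : 0 <= al - T3 <= A1.
  rewrite /T3; case: (mnP al (A2 + A3 + A4)) => -[-> h]; apply/andP; split; lra.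
have eA1 : A2 + A3 + A4 = 3/2 - A1 by lra.
have eA2 : A1 + A2 = 3/2 - (A3 + A4) by lra.
have eA3 : A1 + A2 + A3 = 3/2 - A4 by lra.
have Q1 : 0 <= S1 + T3 - al.
  rewrite /S1 /T3 eA1; apply: phi_ge; lra.
have Q1' : 1 - (A3 + A4) <= S1 + T3 - al.
  rewrite /S1 /T3 eA1; apply: phi_ge; lra.
have Q2 : 1/2 <= S2 + T2 - al.
  rewrite /S2 /T2 eA2 [mn al (3/2 - _) + _]addrC; apply: phi_ge; lra.
have Q3 : 0 <= T1 + S3 - al.
  rewrite /T1 /S3 eA3; apply: phi_ge; lra.
have Q3' : A3 + A4 - 1/2 <= T1 + S3 - al.
  rewrite /T1 /S3 eA3; apply: phi_ge; lra.
have [F1a F1b F1c] := frac_props S1a S1b.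
have [F2a F2b F2c] := frac_props S2a S2b.
have [F3a F3b F3c] := frac_props S3a S3b.
have [F4a F4b F4c] := frac_props (proj1 (andP S3c)) (proj2 (andP S3c)).
have [G1a G1b G1c] := frac_props (proj1 (andP T3c)) (proj2 (andP T3c)).
have [G2a G2b G2c] := frac_props T3a T3b.
have [G3a G3b G3c] := frac_props T2a T2b.
have [G4a G4b G4c] := frac_props T1a T1b.
set f1 := S1 / A1 in F1a F1b F1c.
set f2 := (S2 - S1) / A2 in F2a F2b F2c.
set f3 := (S3 - S2) / A3 in F3a F3b F3c.
set f4 := (al - S3) / A4 in F4a F4b F4c.
set g1 := (al - T3) / A1 in G1a G1b G1c.
set g2 := (T3 - T2) / A2 in G2a G2b G2c.
set g3 := (T2 - T1) / A3 in G3a G3b G3c.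
set g4 := T1 / A4 in G4a G4b G4c.
exists (fun i => nu i * ind4 j (X i) f1 f2 f3 f4), (fun i => nu i * ind4 j (X i) g1 g2 g3 g4).
have sm_sum : \sum_(i < n) nu i * ind4 j (X i) f1 f2 f3 f4 = al.
  rewrite sum_ind4 -/A1 -/A2 -/A3 -/A4 F1a F2a F3a F4a; ring.
have sp_sum : \sum_(i < n) nu i * ind4 j (X i) g1 g2 g3 g4 = al.
  rewrite sum_ind4 -/A1 -/A2 -/A3 -/A4 G1a G2a G3a G4a; ring.
have psi1 : g1 - f1 <= 0.
  rewrite subr_le0 /g1 /f1; apply: ler_wpM2r; [by rewrite invr_ge0 | lra].
have psi4 : 0 <= g4 - f4.
  rewrite subr_ge0 /g4 /f4; apply: ler_wpM2r; [by rewrite invr_ge0 | lra].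
split.
- move=> i /=.
  have /andP[r1 r2] : 0 <= ind4 j (X i) f1 f2 f3 f4 <= 1.
    by apply: ind4_rng; apply/andP; split.
  have := nu0 i => n0; apply/andP; split; nra.
- move=> i /=.
  have /andP[r1 r2] : 0 <= ind4 j (X i) g1 g2 g3 g4 <= 1.
    by apply: ind4_rng; apply/andP; split.
  have := nu0 i => n0; apply/andP; split; nra.
- exact: sm_sum.
- exact: sp_sum.
have E0 : \sum_(i < n) nu i * ind4 j (X i) (g1 - f1) (g2 - f2) (g3 - f3) (g4 - f4) = 0.
  rewrite sum_ind4 -/A1 -/A2 -/A3 -/A4 !mulrBl F1a F2a F3a F4a G1a G2a G3a G4a; ring.
have ED : \sum_(i < n) nu i * ind4 j (X i) g1 g2 g3 g4 * (X i)%:~R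
        - \sum_(i < n) nu i * ind4 j (X i) f1 f2 f3 f4 * (X i)%:~R
        = \sum_(i < n) nu i * (ind4 j (X i) (g1 - f1) (g2 - f2) (g3 - f3) (g4 - f4) * (X i - j)%:~R).
  have -> : \sum_(i < n) nu i * (ind4 j (X i) (g1 - f1) (g2 - f2) (g3 - f3) (g4 - f4) * (X i - j)%:~R)
     = \sum_(i < n) nu i * ind4 j (X i) (g1 - f1) (g2 - f2) (g3 - f3) (g4 - f4) * (X i)%:~R
       - j%:~R * \sum_(i < n) nu i * ind4 j (X i) (g1 - f1) (g2 - f2) (g3 - f3) (g4 - f4).
    rewrite mulr_sumr -sumrB; apply: eq_bigr => i _; rewrite intrB; ring.
  rewrite E0 mulr0 subr0 -sumrB; apply: eq_bigr => i _; rewrite -ind4_lin; ring.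
have EL : \sum_(i < n) nu i * ind4 j (X i) (- (g1 - f1)) 0 (g3 - f3) (2 * (g4 - f4))
   <= \sum_(i < n) nu i * (ind4 j (X i) (g1 - f1) (g2 - f2) (g3 - f3) (g4 - f4) * (X i - j)%:~R).
  apply: ler_sum => i _; apply: ler_wpM2l => //; exact: ind4_pw.
move: EL; rewrite -ED sum_ind4 -/A1 -/A2 -/A3 -/A4 => EL.
have e1 : (- (g1 - f1)) * A1 = S1 - (al - T3) by rewrite mulNr mulrBl G1a F1a; ring.
have e3 : (g3 - f3) * A3 = (T2 - T1) - (S3 - S2) by rewrite mulrBl G3a F3a.
have e4 : (2 * (g4 - f4)) * A4 = 2 * (T1 - (al - S3)) by rewrite -mulrA mulrBl G4a F4a.
rewrite e1 e3 e4 mul0r in EL.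
move: EL ED; set L1 := \sum_(i < n) nu i * ind4 j (X i) f1 f2 f3 f4 * (X i)%:~R.
set L2 := \sum_(i < n) nu i * ind4 j (X i) g1 g2 g3 g4 * (X i)%:~R.
move=> EL ED.
clear -EL ED Q1' Q2 Q3'.
lra.
Qed.



Definition det3 n (X Y : 'I_n -> int) (p q r : 'I_n) : int :=
  (X q - X p) * (Y r - Y p) - (Y q - Y p) * (X r - X p).

Definition good (R : realType) n (X Y : 'I_n -> int) (mu t : 'I_n -> R) (x0 k : int)
  (i1 i2 i3 : 'I_n) :=
  [/\ forall l, 0 <= t l <= mu l, \sum_(l < n) t l = 1,
      \sum_(l < n) t l * (X l)%:~R = x0%:~R /\ \sum_(l < n) t l * (Y l)%:~R = k%:~R,
      [/\ 0 < t i1 < mu i1, 0 < t i2 < mu i2 & 0 < t i3 < mu i3] & det3 X Y i1 i2 i3 != 0].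

Lemma cc (R : realType) (a b w l : R) : 0 <= a <= w -> 0 <= b <= w -> a != b -> 0 < l < 1 ->
  0 < l * a + (1 - l) * b < w.
Proof.
move=> /andP[a0 aw] /andP[b0 bw] ab /andP[l0 l1].
have [h|h] := ltrP a b.
  have h1 := mulr_gt0 l0 (_ : 0 < b - a).
  apply/andP; split; nra.
have h2 : b < a by rewrite lt_neqAle h eq_sym ab.
apply/andP; split; nra.
Qed.

Lemma exists_diff (R : realType) n (f g : 'I_n -> R) :
  \sum_(i < n) f i != \sum_(i < n) g i -> exists i, f i != g i.
Proof.
move=> h; case: (boolP [exists i, f i != g i]) => [/existsP//|/existsPn H].
by case/negP: h; apply/eqP; apply: eq_bigr => i _; have := H i; rewrite negbK => /eqP.
Qed.

Lemma combine (R : realType) n (X Y : 'I_n -> int) (mu nu sm sp eta : 'I_n -> R)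
    (al : R) (k : int) (f : 'I_n) :
  (forall i j, X i = X j -> Y i = Y j -> i = j) ->
  (forall i, Y i != 0 -> nu i = 0) -> (forall i, Y i == 0 -> nu i = mu i) ->
  (forall i, 0 <= sm i <= nu i) -> (forall i, 0 <= sp i <= nu i) ->
  \sum_(i < n) sm i = al -> \sum_(i < n) sp i = al ->
  1 + \sum_(i < n) sm i * (X i)%:~R <= \sum_(i < n) sp i * (X i)%:~R ->
  (forall i, 0 <= eta i <= mu i) -> (forall i, Y i == 0 -> eta i = 0) ->
  \sum_(i < n) eta i = 1 - al -> \sum_(i < n) eta i * (Y i)%:~R = k%:~R ->
  0 < eta f < mu f -> Y f != 0 ->
  (forall z : int, \sum_(i < n) sm i * (X i)%:~R + \sum_(i < n) eta i * (X i)%:~R != z%:~R) ->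
  exists t x0 i1 i2 i3, good X Y mu t x0 k i1 i2 i3.
Proof.
move=> inj nu0 numu hsm hsp ssm ssp hBT heta heta0 seta setaY hf Yf hnz.
set B := \sum_(i < n) sm i * (X i)%:~R in hBT hnz.
set T := \sum_(i < n) sp i * (X i)%:~R in hBT.
set c := \sum_(i < n) eta i * (X i)%:~R in hnz.
have smY : forall i, Y i != 0 -> sm i = 0.
  move=> i /nu0 h; have := hsm i; rewrite h => /andP[h1 h2]; by apply/eqP; rewrite eq_le h1 h2.
have spY : forall i, Y i != 0 -> sp i = 0.
  move=> i /nu0 h; have := hsp i; rewrite h => /andP[h1 h2]; by apply/eqP; rewrite eq_le h1 h2.
set x0 := Num.floor (B + c) + 1.
have hx1 : B + c < x0%:~R by apply: floorD1_gt.
have hx2 : x0%:~R < T + c.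
  have h1 := floor_le (B + c).
  have h2 : (Num.floor (B + c))%:~R != B + c by rewrite eq_sym hnz.
  have h3 : (Num.floor (B + c))%:~R < B + c by rewrite lt_neqAle h2 h1.
  rewrite /x0 intrD; lra.
set l := (T + c - x0%:~R) / (T - B).
have TB : 0 < T - B by lra.
have l0 : 0 < l by rewrite /l divr_gt0 //; lra.
have l1 : l < 1 by rewrite /l ltr_pdivrMr // mul1r; lra.
have lB : l * B + (1 - l) * T + c = x0%:~R.
  rewrite /l; field; rewrite gt_eqF //.
exists (fun i => l * sm i + (1 - l) * sp i + eta i), x0.
have [i1 d1] : exists i, sm i != sp i.
  have BT : B != T by apply/eqP => E; rewrite E in hBT; lra.
  have [i hi] := exists_diff BT.
  by exists i; apply: contra hi => /eqP ->.
have [i2 [d2 i12]] : exists i, sm i != sp i /\ i != i1.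
  have H : \sum_(i < n | i != i1) sm i != \sum_(i < n | i != i1) sp i.
    apply/eqP => E.
    move: ssp; rewrite -ssm (bigD1 i1) //= (bigD1 i1 (P := xpredT)) //= E => /addIr.
    by move/eqP; rewrite eq_sym (negbTE d1).
  move: H; rewrite (big_mkcond (fun i => i != i1)) (big_mkcond (fun i => i != i1)) => H.
  have [i hi] := exists_diff H.
  exists i; case: (eqVneq i i1) hi => [->|ne] /= hi; first by rewrite eqxx in hi.
  by split.
have Y1 : Y i1 == 0.
  by apply: contraT => h; move: d1; rewrite smY // spY // eqxx.
have Y2 : Y i2 == 0.
  by apply: contraT => h; move: d2; rewrite smY // spY // eqxx.
have conv : forall a b w : R, 0 <= a <= w -> 0 <= b <= w -> 0 <= l * a + (1 - l) * b <= w.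
  move=> a b w /andP[a0 aw] /andP[b0 bw]; apply/andP; split; nra.
exists i1, i2, f; split.
- move=> i; case: (eqVneq (Y i) 0) => [/eqP h|h].
    by rewrite heta0 // addr0 -numu //; apply: conv.
  by rewrite smY // spY // !mulr0 !add0r.
- rewrite !big_split /= -!mulr_sumr ssm ssp seta; ring.
- split.
    rewrite -lB /B /T /c !mulr_sumr -!big_split; apply: eq_bigr => i _ /=; ring.
  have z1 : \sum_(i < n) sm i * (Y i)%:~R = 0.
    apply: big1 => i _; case: (eqVneq (Y i) 0) => [->|h]; first by rewrite mulr0.
    by rewrite smY // mul0r.
  have z2 : \sum_(i < n) sp i * (Y i)%:~R = 0.
    apply: big1 => i _; case: (eqVneq (Y i) 0) => [->|h]; first by rewrite mulr0.
    by rewrite spY // mul0r.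
  have -> : \sum_(i < n) (l * sm i + (1 - l) * sp i + eta i) * (Y i)%:~R
      = l * \sum_(i < n) sm i * (Y i)%:~R + (1 - l) * \sum_(i < n) sp i * (Y i)%:~R
        + \sum_(i < n) eta i * (Y i)%:~R.
    by rewrite !mulr_sumr -!big_split; apply: eq_bigr => i _ /=; ring.
  by rewrite z1 z2 setaY !mulr0 !add0r.
- split.
  + rewrite heta0 // addr0 -(numu i1) //.
    by apply: cc; [exact: hsm | exact: hsp | exact: d1 | by rewrite l0 l1].
  + rewrite heta0 // addr0 -(numu i2) //.
    by apply: cc; [exact: hsm | exact: hsp | exact: d2 | by rewrite l0 l1].
  + by rewrite smY // spY // !mulr0 !add0r.
- rewrite /det3 (eqP Y1) (eqP Y2) subrr mul0r subr0 subr0 mulf_neq0 //.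
  apply/eqP => E; move/negP: i12; apply; apply/eqP; apply: inj.
    by apply/eqP; rewrite -subr_eq0 E.
  by rewrite (eqP Y1) (eqP Y2).
Qed.



Lemma perturb (R : realType) n (X Y : 'I_n -> int) (mu eta v : 'I_n -> R) (N : R) :
  (forall i, 0 <= eta i <= mu i) -> (forall i, Y i == 0 -> eta i = 0) ->
  \sum_(i < n) v i = 0 -> \sum_(i < n) v i * (Y i)%:~R = 0 ->
  \sum_(i < n) v i * (X i)%:~R = N -> N != 0 ->
  (forall i, v i != 0 -> 0 < eta i < mu i /\ Y i != 0) ->
  exists (eta' : 'I_n -> R) (d : R),
   [/\ forall i, 0 <= eta' i <= mu i, forall i, Y i == 0 -> eta' i = 0,
       \sum_(i < n) eta' i = \sum_(i < n) eta i,
       \sum_(i < n) eta' i * (Y i)%:~R = \sum_(i < n) eta i * (Y i)%:~R &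
       [/\ \sum_(i < n) eta' i * (X i)%:~R = \sum_(i < n) eta i * (X i)%:~R + d,
           0 < `|d| < 1 & forall i, v i != 0 -> 0 < eta' i < mu i]].
Proof.
move=> heta heta0 sv svY svX N0 hv.
set sl := fun i => Num.min (eta i) (mu i - eta i).
have slp : forall i, v i != 0 -> 0 < sl i.
  move=> i /hv [/andP[h1 h2] _]; by rewrite /sl lt_min h1 subr_gt0 h2.
have sl1 : forall i, sl i <= eta i by move=> i; rewrite /sl ge_min lexx.
have sl2 : forall i, sl i <= mu i - eta i by move=> i; rewrite /sl ge_min lexx orbT.
set S := \sum_(i < n | v i != 0) `|v i| / sl i.
have S0 : 0 <= S.
  by apply: sumr_ge0 => i hi; rewrite divr_ge0 // ltW // slp.
have hvS : forall i, v i != 0 -> `|v i| <= S * sl i.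
  move=> i hi; rewrite -ler_pdivrMr ?slp //.
  rewrite /S (bigD1 i) //= lerDl; apply: sumr_ge0 => k /andP[hk _].
  by rewrite divr_ge0 // ltW // slp.
have N0' : 0 < `|N| by rewrite normr_gt0.
set e := 1 / (2 * (1 + S) * (1 + `|N|)).
have e0 : 0 < e by rewrite /e divr_gt0 // !mulr_gt0 //; lra.
have eS : e * (1 + S) = 1 / (2 * (1 + `|N|)).
  rewrite /e; field; apply/andP; split; rewrite gt_eqF //; lra.
have eN : e * (1 + `|N|) = 1 / (2 * (1 + S)).
  rewrite /e; field; apply/andP; split; rewrite gt_eqF //; lra.
have eS2 : e * (1 + S) <= 1/2.
  rewrite eS ler_pdivrMr ?mulr_gt0 //; try lra.
have eN2 : e * (1 + `|N|) <= 1/2.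
  rewrite eN ler_pdivrMr ?mulr_gt0 //; try lra.
have key : forall i, v i != 0 -> `|e * v i| <= sl i / 2.
  move=> i hi; rewrite normrM (gtr0_norm e0).
  have h1 : e * `|v i| <= e * (S * sl i) by apply: ler_wpM2l; [exact: ltW | exact: hvS].
  have h2 : (e * (1 + S)) * sl i <= 1/2 * sl i by apply: ler_wpM2r => //; exact: ltW (slp _ hi).
  have h3 := ltW (slp _ hi).
  have h4 : 0 <= e * sl i by rewrite mulr_ge0 // ltW.
  move: h1 h2; rewrite mulrDr mulr1 mulrDl; lra.
exists (fun i => eta i + e * v i), (e * N); split.
- move=> i; case: (eqVneq (v i) 0) => [->|hi]; first by rewrite mulr0 addr0.
  have := key i hi; rewrite ler_norml => /andP[k1 k2].
  have := sl1 i; have := sl2 i; have := slp i hi; move=> s0 s1 s2.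
  apply/andP; split; lra.
- move=> i h; rewrite heta0 //; case: (eqVneq (v i) 0) => [->|hi]; first by rewrite mulr0 addr0.
  by have [_ /negP] := hv i hi.
- by rewrite big_split /= -mulr_sumr sv mulr0 addr0.
- rewrite (eq_bigr (fun i => eta i * (Y i)%:~R + e * (v i * (Y i)%:~R))); last by move=> i _; ring.
  by rewrite big_split /= -mulr_sumr svY mulr0 addr0.
split.
- rewrite (eq_bigr (fun i => eta i * (X i)%:~R + e * (v i * (X i)%:~R))); last by move=> i _; ring.
  by rewrite big_split /= -mulr_sumr svX.
- rewrite normrM (gtr0_norm e0) mulr_gt0 //=.
  have : e * `|N| <= 1/2 by move: eN2; rewrite mulrDr mulr1; have := ltW e0; lra.
  lra.
- move=> i hi; have := key i hi; rewrite ler_norml => /andP[k1 k2].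
  have := sl1 i; have := sl2 i; have := slp i hi; move=> s0 s1 s2.
  apply/andP; split; lra.
Qed.



Lemma finish (R : realType) n (X Y : 'I_n -> int) (mu eta v : 'I_n -> R) (be N : R) (k : int) :
  (forall i j, X i = X j -> Y i = Y j -> i = j) ->
  (forall i, 0 <= mu i) -> (forall i, mu i <= 1/2) ->
  \sum_(i < n | Y i == 0) mu i = 3/2 ->
  (forall i, 0 <= eta i <= mu i) -> (forall i, Y i == 0 -> eta i = 0) ->
  \sum_(i < n) eta i = be -> 0 <= be -> be <= 1/2 ->
  \sum_(i < n) eta i * (Y i)%:~R = k%:~R ->
  \sum_(i < n) v i = 0 -> \sum_(i < n) v i * (Y i)%:~R = 0 ->
  \sum_(i < n) v i * (X i)%:~R = N -> N != 0 ->
  (forall i, v i != 0 -> 0 < eta i < mu i /\ Y i != 0) ->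
  exists t x0 i1 i2 i3, good X Y mu t x0 k i1 i2 i3.
Proof.
move=> inj mu0 mu1 hl heta heta0 seta be0 be1 setaY sv svY svX N0 hv.
set nu := fun i => mu i * ((Y i == 0)%R)%:R.
have nu0 : forall i, 0 <= nu i.
  by move=> i; rewrite /nu mulr_ge0 //; case: (Y i == 0).
have nuY : forall i, Y i != 0 -> nu i = 0 by move=> i /negbTE h; rewrite /nu h mulr0.
have numu : forall i, Y i == 0 -> nu i = mu i by move=> i h; rewrite /nu h mulr1.
have hk : forall z : int, \sum_(i | X i == z) nu i <= 1/2.
  move=> z; case: (boolP [exists i, (X i == z) && (Y i == 0)]).
    case/existsP => i0 /andP[/eqP h1 /eqP h2].
    rewrite (bigD1 i0) /=; last by rewrite h1.
    rewrite big1 ?addr0; first by rewrite numu ?h2.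
    move=> i /andP[/eqP hi ne]; apply: nuY; apply: contra ne => /eqP hY.
    by apply/eqP; apply: inj; rewrite ?hi ?h1 ?hY ?h2.
  move/existsPn => H; rewrite big1; first lra.
  move=> i hi; apply: nuY; have := H i; by rewrite hi.
have htot : \sum_(i < n) nu i = 3/2 by rewrite -hl -sum_ind.
have al1 : 1/2 <= 1 - be by lra.
have al2 : 1 - be <= 1 by lra.
have [sm [sp [hsm hsp ssm ssp hBT]]] := oneD nu0 hk htot al1 al2.
have [eta' [d [heta' heta0' seta' setaY' [setaX' hd hv']]]] := perturb heta heta0 sv svY svX N0 hv.
have [f vf] : exists f, v f != 0.
  case: (boolP [exists i, v i != 0]) => [/existsP//|/existsPn H].
  case/negP: N0; rewrite -svX; apply/eqP; apply: big1 => i _.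
  by have := H i; rewrite negbK => /eqP ->; rewrite mul0r.
have [hf Yf] := hv f vf.
have hf' := hv' f vf.
have se : \sum_(i < n) eta i = 1 - (1 - be) by rewrite seta; ring.
have se' : \sum_(i < n) eta' i = 1 - (1 - be) by rewrite seta' seta; ring.
have sY' : \sum_(i < n) eta' i * (Y i)%:~R = k%:~R by rewrite setaY'.
case: (pselect (exists z : int, \sum_(i < n) sm i * (X i)%:~R + \sum_(i < n) eta i * (X i)%:~R = z%:~R)) => [[z1 hz1]|nz].
  apply: (combine inj nuY numu hsm hsp ssm ssp hBT heta' heta0' se' sY' hf' Yf).
  move=> z2; apply/eqP => hz2.
  have dz : d = (z2 - z1)%:~R by rewrite intrB -hz2 -hz1 setaX'; ring.
  move: hd; rewrite dz => /andP[h1 h2].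
  have nz : z2 - z1 != 0 by apply: contraTneq h1 => ->; rewrite normr0 ltxx.
  have := int_norm_ge1 R (z2 - z1) nz; lra.
apply: (combine inj nuY numu hsm hsp ssm ssp hBT heta heta0 se setaY hf Yf).
by move=> z; apply/eqP => hz; apply: nz; exists z.
Qed.



Lemma pos_exists (R : realType) n (mu : 'I_n -> R) (P : pred 'I_n) :
  0 < \sum_(i < n | P i) mu i -> exists i, P i /\ 0 < mu i.
Proof.
move=> h; case: (boolP [exists i, P i && (0 < mu i)]) => [/existsP [i /andP[]]|/existsPn H].
  by exists i.
suff : \sum_(i < n | P i) mu i <= 0 by lra.
apply: sumr_le0 => i hi; have := H i; rewrite hi /= -leNgt //.
Qed.

Lemma sub_sum (R : realType) n (mu : 'I_n -> R) (P Q : pred 'I_n) :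
  (forall i, 0 <= mu i) -> \sum_(i < n | P i && Q i) mu i <= \sum_(i < n | Q i) mu i.
Proof.
move=> mu0; rewrite [X in _ <= X](bigID P) /= [X in _ <= X + _](eq_bigl (fun i => P i && Q i)).
  by rewrite lerDl; apply: sumr_ge0.
by move=> i; rewrite andbC.
Qed.

Lemma sum_dl (R : realType) n (p : 'I_n) (F : 'I_n -> R) :
  \sum_(i < n) ((i == p)%:R * F i) = F p.
Proof.
rewrite (bigD1 p) //= eqxx mul1r big1 ?addr0 // => i /negbTE ->; by rewrite mul0r.
Qed.

Definition v3 (R : realType) n (p q r : 'I_n) (a b c : R) :=
  fun i : 'I_n => (i == p)%:R * a + (i == q)%:R * b + (i == r)%:R * c.

Lemma sum_v3 (R : realType) n (p q r : 'I_n) (a b c : R) (F : 'I_n -> R) :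
  \sum_(i < n) v3 p q r a b c i * F i = a * F p + b * F q + c * F r.
Proof.
rewrite (eq_bigr (fun i => (i == p)%:R * (a * F i) + (i == q)%:R * (b * F i)
   + (i == r)%:R * (c * F i))); last by move=> i _; rewrite /v3; ring.
by rewrite !big_split /= !sum_dl.
Qed.

Lemma v3_supp (R : realType) n (p q r : 'I_n) (a b c : R) i :
  v3 p q r a b c i != 0 -> [\/ i = p, i = q | i = r].
Proof.
rewrite /v3; case: (eqVneq i p) => [->|hp]; first by move=> _; apply: Or31.
case: (eqVneq i q) => [->|hq]; first by move=> _; apply: Or32.
case: (eqVneq i r) => [->|hr]; first by move=> _; apply: Or33.
by rewrite !mul0r !addr0 eqxx.
Qed.

Lemma triple (R : realType) n (X Y : 'I_n -> int) (mu : 'I_n -> R) (P : pred 'I_n) :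
  (forall i, 0 <= mu i) -> (forall i, mu i <= 1/2) ->
  (forall p q, p != q -> \sum_(r < n | det3 X Y p q r == 0) mu r <= 3/2) ->
  3/2 < \sum_(i < n | P i) mu i ->
  exists p q r, [/\ P p /\ 0 < mu p, P q /\ 0 < mu q, P r /\ 0 < mu r & det3 X Y p q r != 0].
Proof.
move=> mu0 mu1 hcol hP.
have h0 : 0 < \sum_(i < n | P i) mu i by lra.
have [p [Pp mp]] := pos_exists h0.
have [q [/andP[Pq qp] mq]] : exists q, (P q && (q != p)) /\ 0 < mu q.
  apply: pos_exists.
  move: hP; rewrite (bigD1 p) //=.
  rewrite (eq_bigl (fun i => P i && (i != p))) //; have := mu1 p; lra.
have [r [/andP[Pr dr] mr]] : exists r, (P r && (det3 X Y p q r != 0)) /\ 0 < mu r.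
  apply: pos_exists.
  have h1 := hcol p q (_ : p != q); rewrite eq_sym in h1; have {h1} h1 := h1 qp.
  have h2 := sub_sum P (fun r => det3 X Y p q r == 0) mu0.
  move: hP; rewrite (bigID (fun r => det3 X Y p q r == 0)) /=; lra.
by exists p, q, r; split.
Qed.



Lemma sum_ind2 (R : realType) n (mu F : 'I_n -> R) (P Q : pred 'I_n) (a b : R) :
  \sum_(i < n) mu i * (a * (P i)%:R + b * (Q i)%:R) * F i =
  a * \sum_(i < n | P i) mu i * F i + b * \sum_(i < n | Q i) mu i * F i.
Proof.
rewrite -(sum_ind (fun i => mu i * F i) P) -(sum_ind (fun i => mu i * F i) Q).
rewrite !mulr_sumr -big_split; apply: eq_bigr => i _ /=; ring.
Qed.

Lemma strict_coef (R : realType) (m c : R) : 0 < m -> 0 < c -> c < 1 -> 0 < m * c < m.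
Proof. move=> h1 h2 h3; apply/andP; split; [exact: mulr_gt0 | nra]. Qed.

Lemma W_facts (R : realType) (Sdn Sup U D : R) :
  0 <= U -> 0 <= D -> 0 <= Sdn -> 0 <= Sup ->
  [/\ Sdn <= (Sdn + Sup) * (U + D + 1), Sup <= (Sdn + Sup) * (U + D + 1) &
      Sdn * U + Sup * D <= (Sdn + Sup) * (U + D + 1)].
Proof. move=> *; split; nra. Qed.

Lemma coef_rng (R : realType) (m c : R) : 0 <= m -> 0 <= c -> c <= 1 -> 0 <= m * c <= m.
Proof. move=> *; apply/andP; split; nra. Qed.

Lemma level0 (R : realType) n (X Y : 'I_n -> int) (mu : 'I_n -> R) :
  (forall i j, X i = X j -> Y i = Y j -> i = j) ->
  (forall i, 0 <= mu i) -> (forall i, mu i <= 1/2) ->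
  \sum_(i < n) mu i = 399%:R / 100%:R ->
  \sum_(i < n | Y i == 0) mu i = 3/2 ->
  (forall p q, p != q -> \sum_(r < n | det3 X Y p q r == 0) mu r <= 3/2) ->
  0 < \sum_(i < n | Y i < 0) mu i -> 0 < \sum_(i < n | 0 < Y i) mu i ->
  exists t x0 k i1 i2 i3, good X Y mu t x0 k i1 i2 i3.
Proof.
move=> inj mu0 mu1 htot hl hcol hD hU.
set U := \sum_(i < n | 0 < Y i) mu i in hU.
set D := \sum_(i < n | Y i < 0) mu i in hD.
set Sup := \sum_(i < n | 0 < Y i) mu i * (Y i)%:~R.
set Sdn := \sum_(i < n | Y i < 0) mu i * - (Y i)%:~R.
have hSup : U <= Sup.
  apply: ler_sum => i hi; rewrite -{1}[mu i]mulr1; apply: ler_wpM2l => //.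
  have : (1 : int) <= Y i by clear -hi; lia.
  by rewrite -(ler_int R).
have hSdn : D <= Sdn.
  apply: ler_sum => i hi; rewrite -{1}[mu i]mulr1; apply: ler_wpM2l => //.
  have : (Y i <= -1)%R by clear -hi; lia.
  move/(intr_le_m1 R); lra.
set W := (Sdn + Sup) * (U + D + 1).
have W0 : 0 < W by rewrite /W mulr_gt0 //; lra.
have [WS1 WS2 WS3] : [/\ Sdn <= W, Sup <= W & Sdn * U + Sup * D <= W].
  apply: W_facts; try lra; by apply: sumr_ge0.
set a := Sdn / (8 * W).
set b := Sup / (8 * W).
have a0 : 0 < a by rewrite /a divr_gt0 //; lra.
have b0 : 0 < b by rewrite /b divr_gt0 //; lra.
have a1 : a < 1 by rewrite /a ltr_pdivrMr; lra.
have b1 : b < 1 by rewrite /b ltr_pdivrMr; lra.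
set eta := fun i => mu i * (a * ((0 < Y i)%R)%:R + b * ((Y i < 0)%R)%:R).
have etaP : forall i, 0 < Y i -> eta i = mu i * a.
  move=> i h; rewrite /eta h; have -> : (Y i < 0) = false by clear -h; lia.
  rewrite /= ?mulr1n ?mulr0n; ring.
have etaN : forall i, Y i < 0 -> eta i = mu i * b.
  move=> i h; rewrite /eta h; have -> : (0 < Y i) = false by clear -h; lia.
  rewrite /= ?mulr1n ?mulr0n; ring.
have eta0 : forall i, Y i == 0 -> eta i = 0.
  move=> i h; rewrite /eta; have -> : (0 < Y i) = false by clear -h; lia.
  have -> : (Y i < 0) = false by clear -h; lia.
  rewrite /= ?mulr1n ?mulr0n; ring.
have etaF : forall i, 0 <= eta i <= mu i.
  move=> i; have := mu0 i => m0.
  have [h|[h|h]] : (0 < Y i) \/ (Y i < 0) \/ (Y i == 0) by clear; lia.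
  - rewrite etaP //; apply: coef_rng => //; lra.
  - rewrite etaN //; apply: coef_rng => //; lra.
  - by rewrite eta0 // lexx.
have etaS : forall i, Y i != 0 -> 0 < mu i -> 0 < eta i < mu i.
  move=> i h m0.
  have [h'|h'] : (0 < Y i) \/ (Y i < 0) by clear -h; lia.
  - by rewrite etaP //; apply: strict_coef.
  - by rewrite etaN //; apply: strict_coef.
have sum2 : forall F : 'I_n -> R, \sum_(i < n) eta i * F i =
    a * \sum_(i < n | 0 < Y i) mu i * F i + b * \sum_(i < n | Y i < 0) mu i * F i.
  by move=> F; rewrite -sum_ind2.
have seta : \sum_(i < n) eta i = a * U + b * D.
  have := sum2 (fun _ => 1); rewrite /U /D.
  under eq_bigr do rewrite mulr1.
  under [in X in _ = _ * X + _ -> _]eq_bigr do rewrite mulr1.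
  by under [in X in _ = _ + _ * X -> _]eq_bigr do rewrite mulr1.
have setaY : \sum_(i < n) eta i * (Y i)%:~R = (0 : int)%:~R.
  rewrite sum2 -/Sup.
  have -> : \sum_(i < n | Y i < 0) mu i * (Y i)%:~R = - Sdn.
    by rewrite /Sdn -sumrN; apply: eq_bigr => i _; rewrite mulrN opprK.
  rewrite /a /b; field; rewrite gt_eqF //; lra.
have be0 : 0 <= a * U + b * D.
  have : 0 <= U by apply: sumr_ge0.
  have : 0 <= D by apply: sumr_ge0.
  move=> *; rewrite addr_ge0 // mulr_ge0 //; lra.
have be1 : a * U + b * D <= 1/2.
  have -> : a * U + b * D = (Sdn * U + Sup * D) / (8 * W) by rewrite /a /b; field; rewrite gt_eqF //; lra.
  rewrite ler_pdivrMr; lra.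
have hoff : 3/2 < \sum_(i < n | Y i != 0) mu i.
  move: htot; rewrite (bigID (fun i => Y i == 0)) /= hl => h.
  have -> : \sum_(i < n | Y i != 0) mu i = 399%:R / 100%:R - 3/2 by rewrite -h; ring.
  lra.
have [p [q [r [[Pp mp] [Pq mq] [Pr mr] dpqr]]]] := triple mu0 mu1 hcol hoff.
pose v := v3 p q r ((Y q - Y r)%:~R : R) ((Y r - Y p)%:~R) ((Y p - Y q)%:~R).
have sv : \sum_(i < n) v i = 0.
  have := sum_v3 p q r ((Y q - Y r)%:~R : R) ((Y r - Y p)%:~R) ((Y p - Y q)%:~R) (fun _ => 1).
  under eq_bigr do rewrite mulr1.
  rewrite /v => ->; rewrite !intrB; ring.
have svY : \sum_(i < n) v i * (Y i)%:~R = 0.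
  rewrite /v sum_v3 !intrB; ring.
have svX : \sum_(i < n) v i * (X i)%:~R = (det3 X Y p q r)%:~R.
  rewrite /v sum_v3 /det3 !(intrB, intrM); ring.
have N0 : ((det3 X Y p q r)%:~R : R) != 0 by rewrite intr_eq0.
have hv : forall i, v i != 0 -> 0 < eta i < mu i /\ Y i != 0.
  move=> i; rewrite /v => /v3_supp [->|->|->]; split => //; exact: etaS.
have mu1' : forall i, mu i <= 1/2 by [].
have [t [x0 [i1 [i2 [i3 G]]]]] := finish inj mu0 mu1' hl etaF eta0 seta be0 be1 setaY sv svY svX N0 hv.
by exists t, x0, 0, i1, i2, i3.
Qed.



Lemma split4 (R : realType) n (Y : 'I_n -> int) (mu : 'I_n -> R) :
  \sum_(i < n) mu i = \sum_(i < n | Y i < 0) mu i + \sum_(i < n | Y i == 0) mu i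
     + \sum_(i < n | Y i == 1) mu i + \sum_(i < n | 1 < Y i) mu i.
Proof.
have := sum_ind4 Y mu 0 1 1 1 1; rewrite !mul1r add0r => <-.
apply: eq_bigr => i _.
by case: (ind4_cases 0 (Y i) (1:R) 1 1 1) => -[] _ ->; rewrite mulr1.
Qed.

Lemma level1_num (R : realType) (S2 H m1 : R) :
  1 < S2 -> 0 <= H -> 2 * H <= S2 -> 0 <= m1 ->
  let ka := (S2 - 2 * H) / (4 * S2 * (m1 + 1)) in
  let la := (1 - ka * m1) / S2 in
  [/\ 0 <= ka, ka < 1, 0 < la, la < 1 &
     [/\ la * S2 + ka * m1 = 1, 0 <= la * H + ka * m1 & la * H + ka * m1 <= 1/2]].
Proof.
move=> hS hH h2 hm ka la.
have S0 : 0 < S2 by lra.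
have D0 : 0 < 4 * S2 * (m1 + 1) by rewrite !mulr_gt0 //; lra.
have ka0 : 0 <= ka by rewrite /ka divr_ge0 //; lra.
have c4 : ka * m1 * S2 <= (S2 - 2 * H) / 4.
  have -> : ka * m1 * S2 = (S2 - 2 * H) / 4 * (m1 / (m1 + 1)).
    rewrite /ka; field; apply/andP; split; rewrite gt_eqF //; lra.
  rewrite -[X in _ <= X]mulr1; apply: ler_wpM2l; first lra.
  by rewrite ler_pdivrMr ?mul1r; lra.
have ka1 : ka < 1 by rewrite /ka ltr_pdivrMr //; nra.
have cm0 : 0 <= ka * m1 by rewrite mulr_ge0.
have cm1 : ka * m1 < 1.
  have : ka * m1 * S2 < S2 by lra.
  by rewrite -{2}[S2]mul1r ltr_pM2r.
have la0 : 0 < la by rewrite /la divr_gt0 //; lra.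
have la1 : la < 1 by rewrite /la ltr_pdivrMr //; lra.
have laS : la * S2 = 1 - ka * m1 by rewrite /la divfK // gt_eqF.
split => //; split; first lra.
  by rewrite addr_ge0 // mulr_ge0 //; lra.
have laH : la * H * S2 = (1 - ka * m1) * H by rewrite -laS; ring.
have cH : 0 <= ka * m1 * H by rewrite mulr_ge0.
suff : (la * H + ka * m1) * S2 <= 1/2 * S2 by rewrite ler_pM2r.
rewrite mulrDl laH; lra.
Qed.

Lemma level1 (R : realType) n (X Y : 'I_n -> int) (mu : 'I_n -> R) :
  (forall i j, X i = X j -> Y i = Y j -> i = j) ->
  (forall i, 0 <= mu i) -> (forall i, mu i <= 1/2) ->
  \sum_(i < n) mu i = 399%:R / 100%:R ->
  \sum_(i < n | Y i == 0) mu i = 3/2 ->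
  (forall p q, p != q -> \sum_(r < n | det3 X Y p q r == 0) mu r <= 3/2) ->
  \sum_(i < n | Y i == 1) mu i <= 3/2 ->
  (forall i, Y i < 0 -> mu i = 0) ->
  exists t x0 k i1 i2 i3, good X Y mu t x0 k i1 i2 i3.
Proof.
move=> inj mu0 mu1 htot hl hcol hl1 hneg.
set m1 := \sum_(i < n | Y i == 1) mu i in hl1.
set H := \sum_(i < n | 1 < Y i) mu i.
set S2 := \sum_(i < n | 1 < Y i) mu i * (Y i)%:~R.
have hneg0 : \sum_(i < n | Y i < 0) mu i = 0 by apply: big1 => i /hneg.
have hH : m1 + H = 399%:R / 100%:R - 3/2.
  by move: htot; rewrite (split4 Y) hneg0 hl -/m1 -/H => <-; ring.
have m10 : 0 <= m1 by apply: sumr_ge0.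
have H0 : 99 / 100 <= H by lra.
have hS2 : 2 * H <= S2.
  rewrite /H /S2 mulr_sumr; apply: ler_sum => i hi; rewrite mulrC; apply: ler_wpM2l => //.
  have : (2 : int) <= Y i by clear -hi; lia.
  by rewrite -(ler_int R).
have S21 : 1 < S2 by lra.
have H0' : 0 <= H by lra.
have [ka0 ka1 la0 la1 [hY1 be0 be1]] := level1_num S21 H0' hS2 m10.
set ka := (S2 - 2 * H) / (4 * S2 * (m1 + 1)) in ka0 ka1 la0 la1 hY1 be0 be1.
set la := (1 - ka * m1) / S2 in la0 la1 hY1 be0 be1.
set eta := fun i => mu i * (la * ((1 < Y i)%R)%:R + ka * ((Y i == 1)%R)%:R).
have etaP : forall i, 1 < Y i -> eta i = mu i * la.
  move=> i h; rewrite /eta h; have -> : (Y i == 1) = false by clear -h; lia.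
  rewrite /= ?mulr1n ?mulr0n; ring.
have eta1 : forall i, Y i == 1 -> eta i = mu i * ka.
  move=> i h; rewrite /eta h; have -> : (1 < Y i) = false by clear -h; lia.
  rewrite /= ?mulr1n ?mulr0n; ring.
have eta0 : forall i, Y i <= 0 -> eta i = 0.
  move=> i h; rewrite /eta; have -> : (1 < Y i) = false by clear -h; lia.
  have -> : (Y i == 1) = false by clear -h; lia.
  rewrite /= ?mulr1n ?mulr0n; ring.
have etaF : forall i, 0 <= eta i <= mu i.
  move=> i; have := mu0 i => m0.
  have [h|[h|h]] : (1 < Y i) \/ (Y i == 1) \/ (Y i <= 0) by clear; lia.
  - rewrite etaP //; apply: coef_rng => //; lra.
  - rewrite eta1 //; apply: coef_rng => //; lra.
  - by rewrite eta0 // lexx.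
have eta00 : forall i, Y i == 0 -> eta i = 0.
  by move=> i h; apply: eta0; rewrite (eqP h).
have sum2 : forall F : 'I_n -> R, \sum_(i < n) eta i * F i =
    la * \sum_(i < n | 1 < Y i) mu i * F i + ka * \sum_(i < n | Y i == 1) mu i * F i.
  by move=> F; rewrite -sum_ind2.
have seta : \sum_(i < n) eta i = la * H + ka * m1.
  have := sum2 (fun _ => 1); rewrite /H /m1.
  under eq_bigr do rewrite mulr1.
  under [in X in _ = _ * X + _ -> _]eq_bigr do rewrite mulr1.
  by under [in X in _ = _ + _ * X -> _]eq_bigr do rewrite mulr1.
have setaY : \sum_(i < n) eta i * (Y i)%:~R = (1 : int)%:~R.
  rewrite sum2 -/S2.
  have -> : \sum_(i < n | Y i == 1) mu i * (Y i)%:~R = m1.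
    by rewrite /m1; apply: eq_bigr => i /eqP ->; rewrite mulr1.
  by rewrite hY1.
have mu1' : forall i, mu i <= 1/2 by [].
have [eS|nS] := eqVneq S2 (2 * H).
- (* all heavy atoms at height 2 *)
  have hH0 : 0 < \sum_(i < n | 1 < Y i) mu i by rewrite -/H; lra.
  have [p [Pp mp]] := pos_exists hH0.
  have [q [/andP[Pq qp] mq]] : exists q, ((1 < Y q) && (q != p)) /\ 0 < mu q.
    apply: pos_exists.
    have := mu1 p; move: H0; rewrite /H (bigD1 p) //=.
    rewrite (eq_bigl (fun i => (1 < Y i) && (i != p))) //; lra.
  have Y2 : forall i, 1 < Y i -> 0 < mu i -> Y i = 2.
    move=> i hi mi.
    have Z : \sum_(i < n | 1 < Y i) mu i * ((Y i)%:~R - 2) = 0.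
      rewrite (eq_bigr (fun i => mu i * (Y i)%:~R - 2 * mu i)); last by move=> k _; ring.
      by rewrite sumrB -mulr_sumr -/S2 -/H eS subrr.
    have nn : forall k, 1 < Y k -> 0 <= mu k * ((Y k)%:~R - 2).
      move=> k hk; apply: mulr_ge0 => //.
      have : (2 : int) <= Y k by clear -hk; lia.
      by rewrite -(ler_int R) subr_ge0.
    have := psumr_eq0P nn Z hi.
    move/eqP; rewrite mulf_eq0 gt_eqF //= subr_eq0 => /eqP h.
    by apply/eqP; rewrite -(eqr_int R) h.
  have Yp := Y2 p Pp mp; have Yq := Y2 q Pq mq.
  pose v := v3 p q p (1 : R) (-1) 0.
  have sv : \sum_(i < n) v i = 0.
    have := sum_v3 p q p (1 : R) (-1) 0 (fun _ => 1).
    under eq_bigr do rewrite mulr1.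
    rewrite /v => ->; ring.
  have svY : \sum_(i < n) v i * (Y i)%:~R = 0 by rewrite /v sum_v3 Yp Yq; ring.
  have svX : \sum_(i < n) v i * (X i)%:~R = (X p - X q)%:~R by rewrite /v sum_v3 intrB; ring.
  have N0 : ((X p - X q)%:~R : R) != 0.
    rewrite intr_eq0 subr_eq0; apply: contra qp => /eqP e.
    by apply/eqP; apply: inj; rewrite ?e ?Yp ?Yq.
  have hv : forall i, v i != 0 -> 0 < eta i < mu i /\ Y i != 0.
    move=> i; rewrite /v => /v3_supp [->|->|->]; (split; [rewrite etaP //; exact: strict_coef | ]).
    + by rewrite Yp.
    + by rewrite Yq.
    + by rewrite Yp.
  have [t [x0 [i1 [i2 [i3 G]]]]] :=
    finish inj mu0 mu1' hl etaF eta00 seta be0 be1 setaY sv svY svX N0 hv.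
  by exists t, x0, 1, i1, i2, i3.
-
  have kap : 0 < ka.
    have hh : 0 < S2 - 2 * H by rewrite subr_gt0 lt_neqAle eq_sym nS hS2.
    rewrite /ka divr_gt0 // !mulr_gt0 //; lra.
  have hup : 3/2 < \sum_(i < n | 0 < Y i) mu i.
    rewrite (bigID (fun i => Y i == 1)) /=.
    rewrite (eq_bigl (fun i => Y i == 1)); last by move=> i; clear; lia.
    rewrite (eq_bigl (fun i => 1 < Y i) (P1 := fun i => (0 < Y i) && (Y i != 1))); last by move=> i; clear; lia.
    rewrite -/m1 -/H hH; lra.
  have [p [q [r [[Pp mp] [Pq mq] [Pr mr] dpqr]]]] := triple mu0 mu1 hcol hup.
  pose v := v3 p q r ((Y q - Y r)%:~R : R) ((Y r - Y p)%:~R) ((Y p - Y q)%:~R).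
  have sv : \sum_(i < n) v i = 0.
    have := sum_v3 p q r ((Y q - Y r)%:~R : R) ((Y r - Y p)%:~R) ((Y p - Y q)%:~R) (fun _ => 1).
    under eq_bigr do rewrite mulr1.
    rewrite /v => ->; rewrite !intrB; ring.
  have svY : \sum_(i < n) v i * (Y i)%:~R = 0 by rewrite /v sum_v3 !intrB; ring.
  have svX : \sum_(i < n) v i * (X i)%:~R = (det3 X Y p q r)%:~R.
    rewrite /v sum_v3 /det3 !(intrB, intrM); ring.
  have N0 : ((det3 X Y p q r)%:~R : R) != 0 by rewrite intr_eq0.
  have etaS : forall i, 0 < Y i -> 0 < mu i -> 0 < eta i < mu i.
    move=> i h m0.
    have [h'|h'] : (1 < Y i) \/ (Y i == 1) by clear -h; lia.
    - by rewrite etaP //; apply: strict_coef.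
    - by rewrite eta1 //; apply: strict_coef.
  have hv : forall i, v i != 0 -> 0 < eta i < mu i /\ Y i != 0.
    move=> i; rewrite /v => /v3_supp [->|->|->]; (split; [exact: etaS | ]).
    + by move: Pp; clear; lia.
    + by move: Pq; clear; lia.
    + by move: Pr; clear; lia.
  have [t [x0 [i1 [i2 [i3 G]]]]] :=
    finish inj mu0 mu1' hl etaF eta00 seta be0 be1 setaY sv svY svX N0 hv.
  by exists t, x0, 1, i1, i2, i3.
Qed.



Lemma core (R : realType) n (X Y : 'I_n -> int) (mu : 'I_n -> R) :
  (forall i j, X i = X j -> Y i = Y j -> i = j) ->
  (forall i, 0 <= mu i) -> (forall i, mu i <= 1/2) ->
  \sum_(i < n) mu i = 399%:R / 100%:R ->
  \sum_(i < n | Y i == 0) mu i = 3/2 ->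
  (forall p q, p != q -> \sum_(r < n | det3 X Y p q r == 0) mu r <= 3/2) ->
  \sum_(i < n | Y i == 1) mu i <= 3/2 ->
  (forall i, Y i < 0 -> mu i = 0) \/
    (0 < \sum_(i < n | Y i < 0) mu i /\ 0 < \sum_(i < n | 0 < Y i) mu i) ->
  exists t x0 k i1 i2 i3, good X Y mu t x0 k i1 i2 i3.
Proof.
move=> inj mu0 mu1 htot hl hcol hl1 [hneg|[hD hU]].
  exact: level1.
exact: level0.
Qed.

Lemma main_or (R : realType) n (a : 'I_n -> int * int) (mu : 'I_n -> R)
    (c1 c2 c0 : R) (b : int * int) (v1 v2 u1 u2 : int) :
  injective a -> (forall i, 0 <= mu i) -> \sum_(i < n) mu i = 399%:R / 100%:R ->
  (forall i, mu i <= 1/2) ->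
  (forall c1 c2 c0 : R, (c1, c2) != (0, 0) ->
     points_in a mu (on_line c1 c2 c0) <= 3%:R / 2%:R) ->
  u1 * v1 + u2 * v2 = 1 ->
  c1 * (b.1)%:~R + c2 * (b.2)%:~R = c0 -> c1 * v1%:~R + c2 * v2%:~R = 0 ->
  (c1, c2) != (0, 0) ->
  points_in a mu (on_line c1 c2 c0) = 3%:R / 2%:R ->
  (forall i, v1 * ((a i).2 - b.2) - v2 * ((a i).1 - b.1) < 0 -> mu i = 0) \/
    (0 < \sum_(i < n | v1 * ((a i).2 - b.2) - v2 * ((a i).1 - b.1) < 0) mu i /\
     0 < \sum_(i < n | 0 < v1 * ((a i).2 - b.2) - v2 * ((a i).1 - b.1)) mu i) ->
  exists z : int * int, interior (Sigma1R a mu) (toR2 R z).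
Proof.
move=> inja mu0 htot mu1 hline hdet hb hcv hc hpl hor.
set Y := fun i => v1 * ((a i).2 - b.2) - v2 * ((a i).1 - b.1).
set X := fun i => u1 * ((a i).1 - b.1) + u2 * ((a i).2 - b.2).
have id1 : forall i, (a i).1 = b.1 + X i * v1 - Y i * u2.
  move=> i; have : X i * v1 - Y i * u2 = ((a i).1 - b.1) * (u1 * v1 + u2 * v2).
    by rewrite /X /Y /=; ring.
  rewrite hdet mulr1 => h; rewrite -addrA h; ring.
have id2 : forall i, (a i).2 = b.2 + X i * v2 + Y i * u1.
  move=> i; have : X i * v2 + Y i * u1 = ((a i).2 - b.2) * (u1 * v1 + u2 * v2).
    by rewrite /X /Y /=; ring.
  rewrite hdet mulr1 => h; rewrite -addrA h; ring.
have inj : forall i j, X i = X j -> Y i = Y j -> i = j.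
  move=> i j hx hy; apply: inja.
  by rewrite [a i]surjective_pairing [a j]surjective_pairing id1 id2 (id1 j) (id2 j) hx hy.
have cw0 : c2 * u1%:~R - c1 * u2%:~R != 0.
  apply: contra hc => /eqP hw.
  have e1 : c1 = - v2%:~R * (c2 * u1%:~R - c1 * u2%:~R) + u1%:~R * (c1 * v1%:~R + c2 * v2%:~R).
    have : ((u1 * v1 + u2 * v2)%:~R : R) = 1 by rewrite hdet.
    rewrite intrD !intrM => h.
    have E : c1 * (u1%:~R * v1%:~R + u2%:~R * v2%:~R) = - v2%:~R * (c2 * u1%:~R - c1 * u2%:~R) + u1%:~R * (c1 * v1%:~R + c2 * v2%:~R) by ring.
    by rewrite h mulr1 in E.
  have e2 : c2 = v1%:~R * (c2 * u1%:~R - c1 * u2%:~R) + u2%:~R * (c1 * v1%:~R + c2 * v2%:~R).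
    have : ((u1 * v1 + u2 * v2)%:~R : R) = 1 by rewrite hdet.
    rewrite intrD !intrM => h.
    have E : c2 * (u1%:~R * v1%:~R + u2%:~R * v2%:~R) = v1%:~R * (c2 * u1%:~R - c1 * u2%:~R) + u2%:~R * (c1 * v1%:~R + c2 * v2%:~R) by ring.
    by rewrite h mulr1 in E.
  have -> : c1 = 0 by rewrite e1 hw hcv !mulr0 addr0.
  have -> : c2 = 0 by rewrite e2 hw hcv !mulr0 addr0.
  by [].
have onl : forall i, on_line c1 c2 c0 (toR2 R (a i)) = (Y i == 0).
  move=> i; rewrite /on_line /toR2 /= (id1 i) (id2 i).
  move: (X i) (Y i) => x y.
  set L := (X in (X == _)).
  have E : L = c0 + y%:~R * (c2 * u1%:~R - c1 * u2%:~R).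
    have E' : L - (c0 + y%:~R * (c2 * u1%:~R - c1 * u2%:~R)) = x%:~R * (c1 * v1%:~R + c2 * v2%:~R).
      by rewrite /L -hb !(intrD, intrB, intrM, intrN); ring.
    by apply/eqP; rewrite -subr_eq0 E' hcv mulr0.
  rewrite E -[X in _ == X]addr0 (inj_eq (addrI c0)) mulf_eq0 (negbTE cw0) orbF.
  by rewrite intr_eq0.
have hl : \sum_(i < n | Y i == 0) mu i = 3/2.
  by move: hpl; rewrite /points_in (eq_bigl _ _ onl) => ->.
have hcol : forall p q, p != q -> \sum_(r < n | det3 X Y p q r == 0) mu r <= 3/2.
  move=> p q pq.
  have apq : a p != a q by apply: contra pq => /eqP /inja ->.
  set C1 : R := ((a q).2 - (a p).2)%:~R.
  set C2 : R := ((a p).1 - (a q).1)%:~R.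
  set C0 := C1 * ((a p).1)%:~R + C2 * ((a p).2)%:~R.
  have hC : (C1, C2) != (0, 0).
    apply: contra apq => /eqP [] /eqP h1 /eqP h2.
    move: h1 h2; rewrite /C1 /C2 !intr_eq0 !subr_eq0 => /eqP h1 /eqP h2.
    by rewrite [a p]surjective_pairing [a q]surjective_pairing h1 h2.
  have := hline C1 C2 C0 hC; rewrite /points_in.
  have onl2 : forall r, on_line C1 C2 C0 (toR2 R (a r)) = (det3 X Y p q r == 0).
    move=> r; rewrite /on_line /toR2 /=.
    set Dold := ((a q).2 - (a p).2) * ((a r).1 - (a p).1) + ((a p).1 - (a q).1) * ((a r).2 - (a p).2).
    have E : C1 * ((a r).1)%:~R + C2 * ((a r).2)%:~R - C0 = Dold%:~R.
      by rewrite /C1 /C2 /C0 /Dold !(intrD, intrB, intrM, intrN); ring.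
    have Dd : Dold = - det3 X Y p q r.
      have : Dold * (u1 * v1 + u2 * v2) = - det3 X Y p q r by rewrite /Dold /det3 /X /Y /=; ring.
      by rewrite hdet mulr1.
    by rewrite -subr_eq0 E intr_eq0 Dd oppr_eq0.
  by rewrite (eq_bigl _ _ onl2).
have hl1 : \sum_(i < n | Y i == 1) mu i <= 3/2.
  have hv : (v1, v2) != (0, 0).
    apply/negP => /eqP [] h1 h2; move: hdet; rewrite h1 h2 !mulr0 addr0 => /eqP.
    by rewrite eq_sym oner_eq0.
  set C1 : R := (- v2)%:~R.
  set C2 : R := v1%:~R.
  set C0 := 1 + C1 * (b.1)%:~R + C2 * (b.2)%:~R.
  have hC : (C1, C2) != (0, 0).
    apply: contra hv => /eqP [] /eqP h1 /eqP h2.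
    move: h1 h2; rewrite /C1 /C2 !intr_eq0 oppr_eq0 => /eqP -> /eqP ->.
    by [].
  have := hline C1 C2 C0 hC; rewrite /points_in.
  have onl2 : forall r, on_line C1 C2 C0 (toR2 R (a r)) = (Y r == 1).
    move=> r; rewrite /on_line /toR2 /=.
    have E : C1 * ((a r).1)%:~R + C2 * ((a r).2)%:~R - C0 = (Y r - 1)%:~R.
      by rewrite /C1 /C2 /C0 /Y /= !(intrD, intrB, intrM, intrN); ring.
    by rewrite -subr_eq0 E intr_eq0 subr_eq0.
  by rewrite (eq_bigl _ _ onl2).
have hor' : (forall i, Y i < 0 -> mu i = 0) \/
    (0 < \sum_(i < n | Y i < 0) mu i /\ 0 < \sum_(i < n | 0 < Y i) mu i) by [].
have [t [x0 [k [i1 [i2 [i3 [ht ht1 [htX htY] [f1 f2 f3] hd]]]]]]] :=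
  core inj mu0 mu1 htot hl hcol hl1 hor'.
exists (b.1 + x0 * v1 - k * u2, b.2 + x0 * v2 + k * u1).
have -> : toR2 R (b.1 + x0 * v1 - k * u2, b.2 + x0 * v2 + k * u1) =
    (\sum_(l < n) t l * ((a l).1)%:~R, \sum_(l < n) t l * ((a l).2)%:~R).
  rewrite /toR2 /=; congr (_, _).
  - rewrite (eq_bigr (fun l => t l * (b.1)%:~R + (t l * (X l)%:~R) * v1%:~R - (t l * (Y l)%:~R) * u2%:~R));
      last by move=> l _; rewrite (id1 l); move: (X l) (Y l) => x y; rewrite !(intrD, intrB, intrM, intrN); ring.
    rewrite sumrB big_split /= -!mulr_suml ht1 htX htY !(intrD, intrB, intrM, intrN); ring.
  - rewrite (eq_bigr (fun l => t l * (b.2)%:~R + (t l * (X l)%:~R) * v2%:~R + (t l * (Y l)%:~R) * u1%:~R));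
      last by move=> l _; rewrite (id2 l); move: (X l) (Y l) => x y; rewrite !(intrD, intrB, intrM, intrN); ring.
    rewrite !big_split /= -!mulr_suml ht1 htX htY !(intrD, intrB, intrM, intrN); ring.
apply: (@interior_free R n a mu t i1 i2 i3 ht ht1 f1 f2 f3).
have : (((a i2).1 - (a i1).1) * ((a i3).2 - (a i1).2) - ((a i2).2 - (a i1).2) * ((a i3).1 - (a i1).1))
   * (u1 * v1 + u2 * v2) = det3 X Y i1 i2 i3 by rewrite /det3 /X /Y /=; ring.
by rewrite hdet mulr1 => ->.
Qed.

Unset Implicit Arguments. Set Strict Implicit.


Theorem lemma3p4 (R : realType) (n : nat) (a : 'I_n -> int * int)
  (mu : 'I_n -> R) :
  real_seq a mu ->
  total_mult mu = 399%:R / 100%:R ->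
  (forall i, mu i <= 2^-1) ->
  (forall c1 c2 c0 : R, (c1, c2) != (0, 0) ->
     points_in a mu (on_line c1 c2 c0) <= 3%:R / 2%:R) ->
  (exists c1 c2 c0 : R, (c1, c2) != (0, 0) /\
     points_in a mu (on_line c1 c2 c0) = 3%:R / 2%:R) ->
  exists z : int * int, interior (Sigma1R a mu) (toR2 R z).
Proof.
move=> [inja mu0] htot hmax hline [c1 [c2 [c0 [hc hpl]]]].
have mu1 : forall i, mu i <= 1/2 by move=> i; rewrite div1r; exact: hmax.
have hpl' : \sum_(i < n | on_line c1 c2 c0 (toR2 R (a i))) mu i = 3/2 by exact: hpl.
have h0 : 0 < \sum_(i < n | on_line c1 c2 c0 (toR2 R (a i))) mu i by rewrite hpl'; lra.
have [i0 [Li0 mi0]] := pos_exists h0.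
have [j0 [/andP[Lj0 ji] mj0]] : exists j, (on_line c1 c2 c0 (toR2 R (a j)) && (j != i0)) /\ 0 < mu j.
  apply: pos_exists.
  have := mu1 i0; move: hpl'; rewrite (bigD1 i0) //=.
  rewrite (eq_bigl (fun i => on_line c1 c2 c0 (toR2 R (a i)) && (i != i0))) //; lra.
set b := a i0.
set d1 := (a j0).1 - b.1.
set d2 := (a j0).2 - b.2.
have dnz : (d1 != 0) || (d2 != 0).
  apply: contraT; rewrite negb_or !negbK => /andP[/eqP h1 /eqP h2].
  suff e : j0 = i0 by move: ji; rewrite e eqxx.
  apply: inja.
  rewrite [a j0]surjective_pairing [a i0]surjective_pairing.
  by move: h1 h2; rewrite /d1 /d2 /b => /eqP; rewrite subr_eq0 => /eqP -> /eqP; rewrite subr_eq0 => /eqP ->.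
set g := gcdz d1 d2.
have g0 : g != 0 by rewrite /g gcdz_eq0 negb_and.
set v1 := (d1 %/ g)%Z.
set v2 := (d2 %/ g)%Z.
have ed1 : v1 * g = d1 by apply: divzK; apply: dvdz_gcdl.
have ed2 : v2 * g = d2 by apply: divzK; apply: dvdz_gcdr.
have [u1 [u2 hbz]] := Bezoutz d1 d2.
have hdet : u1 * v1 + u2 * v2 = 1.
  have hbz' : u1 * d1 + u2 * d2 = g by exact: hbz.
  apply: (mulIf g0); rewrite /= mul1r -{2}hbz' -{1}ed1 -{1}ed2; ring.
have hb : c1 * (b.1)%:~R + c2 * (b.2)%:~R = c0 by apply/eqP.
have hj : c1 * ((a j0).1)%:~R + c2 * ((a j0).2)%:~R = c0 by apply/eqP.
have hcv : c1 * v1%:~R + c2 * v2%:~R = 0.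
  have gR : (g%:~R : R) != 0 by rewrite intr_eq0.
  apply: (mulIf gR); rewrite /= mul0r.
  have e1 : ((a j0).1)%:~R = (b.1)%:~R + (v1 * g)%:~R :> R by rewrite ed1 /d1 intrB; ring.
  have e2 : ((a j0).2)%:~R = (b.2)%:~R + (v2 * g)%:~R :> R by rewrite ed2 /d2 intrB; ring.
  move: hj; rewrite e1 e2 !intrM -hb => hj.
  have : (c1 * v1%:~R + c2 * v2%:~R) * g%:~R = 0 by move/eqP: hj; rewrite -subr_eq0 => /eqP <-; ring.
  by [].
have mu1' := mu1.
set Yp := fun i => v1 * ((a i).2 - b.2) - v2 * ((a i).1 - b.1).
have Dge : 0 <= \sum_(i < n | Yp i < 0) mu i by apply: sumr_ge0.
have Uge : 0 <= \sum_(i < n | 0 < Yp i) mu i by apply: sumr_ge0.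
case: (eqVneq (\sum_(i < n | Yp i < 0) mu i) 0) => [Dz|Dnz].
  apply: (main_or inja mu0 htot mu1 hline hdet hb hcv hc hpl); left => i hi.
  exact: (psumr_eq0P (fun i _ => mu0 i) Dz hi).
case: (eqVneq (\sum_(i < n | 0 < Yp i) mu i) 0) => [Uz|Unz].
  have hdet' : (- u1) * (- v1) + (- u2) * (- v2) = 1 by rewrite !mulrNN.
  have hcv' : c1 * (- v1)%:~R + c2 * (- v2)%:~R = 0 by rewrite !intrN !mulrN -opprD hcv oppr0.
  apply: (main_or inja mu0 htot mu1 hline hdet' hb hcv' hc hpl); left => i hi.
  have hi' : 0 < Yp i by rewrite /Yp; move: hi; clear; lia.
  exact: (psumr_eq0P (fun i _ => mu0 i) Uz hi').
apply: (main_or inja mu0 htot mu1 hline hdet hb hcv hc hpl); right.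
by split; rewrite lt_neqAle eq_sym ?Dnz ?Unz.
Qed.
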